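(* Let $\mathcal{N}=\{1,\dots,N\}$ be a finite index set of blocks, let $\sigma>0$, and let $\mu_1,\dots,\mu_N\in\mathbb{R}$. For a fixed user $i$, let $p_{i,1},\dots,p_{i,N}>0$ be prior probabilities with $\sum_{n\in\mathcal{N}}p_{i,n}=1$. For $n\in\mathcal{N}$ let $\mathbb{P}(s\mid n)=\frac{1}{\sqrt{2\pi\sigma^2}}e^{-(s-\mu_n)^2/(2\sigma^2)}$ be the Gaussian density with mean $\mu_n$ and standard deviation $\sigma$. For $n'\in\mathcal{N}$ define the decision region $$\mathcal{R}_{i,n'}=\Big\{s\in\mathbb{R} : (s-\mu_{n'})^2-(s-\mu_n)^2\le 2\sigma^2\ln\frac{p_{i,n'}}{p_{i,n}}\ \text{ for all } n\in\mathcal{N}\setminus\{n'\}\Big\}.$$ Let $n,n'\in\mathcal{N}$ with $n\neq n'$ and $\mu_n\neq\mu_{n'}$, and set $$d_{i,n,n'}=\frac{(\mu_{n'}-\mu_n)^2-2\sigma^2\ln(p_{i,n'}/p_{i,n})}{2\sigma|\mu_{n'}-\mu_n|}.$$ Then $$\int_{\mathcal{R}_{i,n'}}\mathbb{P}(s\mid n)\,ds\le\begin{cases}\frac{1}{2}e^{-d_{i,n,n'}^2/2}, & d_{i,n,n'}\ge 0,\\[4pt] 1-\frac{1}{4}e^{-2d_{i,n,n'}^2/\pi}, & d_{i,n,n'}<0.\end{cases}$$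
   Context: This arises in received-signal-strength (RSS) based positioning: the space is divided into blocks $n$, the RSS measured by a user located in block $n$ is Gaussian with mean $\mu_n$ and standard deviation $\sigma$, $p_{i,n}$ is the prior probability that user $i$ is in block $n$, and $\mathcal{R}_{i,n'}$ is the set of RSS values for which the (prior-weighted maximum likelihood) estimate of user $i$'s location is block $n'$. The integral is thus the probability that a user in block $n$ is wrongly located in block $n'$. *)

(* Defs.v *)
From mathcomp Require Import all_boot all_order all_algebra.
From mathcomp Require Import all_classical all_reals all_analysis.
Set Implicit Arguments. Unset Strict Implicit. Unset Printing Implicit Defensive.
Import Order.TTheory GRing.Theory Num.Theory.
Local Open Scope classical_set_scope.
Local Open Scope ring_scope.

Definition gauss_pdf (R : realType) (sigma mu s : R) : R :=
  (Num.sqrt (2 * pi * sigma ^+ 2))^-1 * expR (- ((s - mu) ^+ 2) / (2 * sigma ^+ 2)).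

Definition decision_region (R : realType) (N : nat) (sigma : R)
    (mu p : 'I_N -> R) (n' : 'I_N) : set R :=
  [set s | forall n : 'I_N, n != n' ->
     (s - mu n') ^+ 2 - (s - mu n) ^+ 2 <= 2 * sigma ^+ 2 * ln (p n' / p n)].

Definition dist_d (R : realType) (N : nat) (sigma : R)
    (mu p : 'I_N -> R) (n n' : 'I_N) : R :=
  ((mu n' - mu n) ^+ 2 - 2 * sigma ^+ 2 * ln (p n' / p n))
  / (2 * sigma * `|mu n' - mu n|).

Definition error_bound (R : realType) (d : R) : R :=
  if 0 <= d then 2^-1 * expR (- (d ^+ 2) / 2)
  else 1 - 4^-1 * expR (- (2 * d ^+ 2) / pi).

(* Main.v *)
Require Import Defs.
From mathcomp Require Import all_boot all_order all_algebra.
From mathcomp Require Import all_classical all_reals all_analysis measurable_realfun.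
From mathcomp Require Import zify ring lra.
Import Order.TTheory GRing.Theory Num.Theory numFieldNormedType.Exports.
Local Open Scope classical_set_scope.
Local Open Scope ring_scope.

Section PiBound.
Variable R : realType.

Let pair_pos (x : R) (k : nat) : x != 0 -> x ^+ 2 < 56 -> (3 <= k)%N -> odd k ->
  0 < - cos_coeff' x k + - cos_coeff' x k.+1.
Proof.
move=> x0 x56 k3 ok.
rewrite /cos_coeff' -!exprnP -(signr_odd _ k) -(signr_odd _ k.+1) /= ok /= expr1 expr0.
rewrite !mulN1r !mul1r mulNr opprK.
rewrite doubleS !factS !natrM.
have hf : 0 < (k.*2)`!%:R :> R by rewrite ltr0n fact_gt0.
set F := (k.*2)`!%:R : R.
set a := (k.*2.+1)%:R : R.
set b := (k.*2.+2)%:R : R.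
have ha : 56 <= a * b.
  rewrite /a /b -natrM ler_nat.
  have h6 : (7 <= k.*2.+1)%N by rewrite -addnn; lia.
  have h8 : (8 <= k.*2.+2)%N by rewrite -addnn; lia.
  exact: (leq_mul h6 h8).
have hx : 0 < x ^+ 2 by rewrite exprn_even_gt0.
rewrite [x ^+ k.*2.+2](_ : x ^+ (k.*2.+2) = x ^+ 2 * x ^+ k.*2); last by rewrite -exprD addnC addn2.
have hxk : 0 < x ^+ k.*2 by rewrite -muln2 mulnC exprM exprn_gt0.
have ha0 : 0 < a by rewrite /a ltr0n.
have hb0 : 0 < b by rewrite /b ltr0n.
rewrite invfM invfM.
set X := x ^+ k.*2.
set y := x ^+ 2.
have -> : X / F - y * X * (b^-1 * (a^-1 / F)) = X / F * (1 - y / (a * b)).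
  field; rewrite ?gt_eqF //.
apply: mulr_gt0; first by rewrite divr_gt0.
rewrite subr_gt0 ltr_pdivrMr ?mul1r ?mulr_gt0 //.
exact: lt_le_trans x56 ha.
Qed.

Lemma cos85_lt0 : cos (8 / 5 : R) < 0.
Proof.
rewrite -(opprK (cos _)) oppr_lt0; have /cvgN h := @cvg_cos_coeff' R (8/5).
rewrite -(cvg_lim _ h) //.
apply: (@lt_trans _ _ (\sum_(0 <= i < 3) - cos_coeff' (8/5) i)).
  do 3 rewrite big_nat_recl//; rewrite big_nil addr0 /cos_coeff' /=.
  rewrite !factS fact0 /= -!exprnP !exprS !expr0 /=. lra.
rewrite -seriesN lt_sum_lim_series //.
  by move/cvgP in h; by rewrite seriesN.
move=> d; rewrite addnS; apply: pair_pos.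
- by rewrite gt_eqF // divr_gt0.
- rewrite expr2; lra.
- by rewrite leq_addr.
- by rewrite oddD odd_double.
Qed.

Lemma pi_le165 : pi <= 16 / 5 :> R.
Proof.
rewrite leNgt; apply/negP => h.
have : 0 < cos (8 / 5 : R).
  apply: cos_gt0_pihalf; apply/andP; split.
  - have := @pi_gt0 R; lra.
  - lra.
have := cos85_lt0; lra.
Qed.
End PiBound.

Section Key.
Variable R : realType.
Let pi_le : pi <= 16 / 5 :> R := pi_le165 R.

Lemma expR_half_ge : 6561 / 4096 <= expR (1 / 2 : R).
Proof.
have -> : (1 / 2 : R) = 4%:R * (1 / 8) by lra.
rewrite expRM_natl.
have h : 9 / 8 <= expR (1 / 8 : R) by have := expR_ge1Dx (1 / 8 : R); lra.
have -> : (6561 / 4096 : R) = (9 / 8) ^+ 4 by rewrite !exprS expr0; lra.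
by rewrite lerXn2r // ?nnegrE // (le_trans _ h).
Qed.

Lemma key_ineq (v : R) : 0 <= v ->
  v / pi * expR (- (2 * v ^+ 2) / pi) <=
  (Num.sqrt (2 * pi))^-1 * expR (- (v ^+ 2) / 2).
Proof.
move=> v0.
have pi2 : 2 <= pi :> R := pi_ge2 R.
have hp : pi <= 16/5 :> R by exact: pi_le.
have pi0 : 0 < pi :> R := pi_gt0 R.
set a := 2 / pi - 1 / 2 : R.
have ha : 0 < a.
  have : 5 / 8 <= 2 / pi :> R by rewrite ler_pdivlMr //; lra.
  rewrite /a; lra.
set X := expR (- (2 * v ^+ 2) / pi).
have X0 : 0 < X by exact: expR_gt0.
have -> : expR (- (v ^+ 2) / 2) = X * expR (a * v ^+ 2).
  rewrite -expRD /X /a; congr expR.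
  have : forall p : R, p != 0 -> - (v ^+ 2) / 2 = - (2 * v ^+ 2) / p + (2 / p - 1 / 2) * v ^+ 2.
    by move=> p p0; field.
  by apply; rewrite gt_eqF.
have Ea : expR (1 / 2) * (1 / 2 + a * v ^+ 2) <= expR (a * v ^+ 2).
  have -> : expR (a * v ^+ 2) = expR (1 / 2) * expR (a * v ^+ 2 - 1 / 2).
    by rewrite -expRD; congr expR; ring.
  rewrite ler_pM2l ?expR_gt0 //.
  by have := expR_ge1Dx (a * v ^+ 2 - 1 / 2); lra.
set s := Num.sqrt (2 * pi).
have s0 : 0 < s by rewrite sqrtr_gt0; lra.
have s2 : s ^+ 2 = 2 * pi by rewrite sqr_sqrtr //; lra.
set C : R := 6561 / 4096.
have hC := expR_half_ge.
have hv2 : 0 <= v ^+ 2 by exact: sqr_ge0.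
suff H : v / pi <= s^-1 * (C * (1 / 2 + a * v ^+ 2)).
  rewrite mulrCA [X in X <= _]mulrC ler_pM2l //.
  apply: (le_trans H); rewrite ler_pM2l ?invr_gt0 //.
  apply: le_trans Ea; rewrite ler_pM2r; first exact: hC.
  by have := mulr_ge0 (ltW ha) hv2; lra.
rewrite ler_pdivrMr // -mulrA ler_pdivlMl //.
set A := C * (2 - pi / 2).
set B := C * (pi / 2).
have hA : 0 < A by rewrite /A /C; lra.
have -> : C * (1 / 2 + a * v ^+ 2) * pi = A * v ^+ 2 + B.
  rewrite /A /B /a.
  have : forall p : R, p != 0 -> C * (1 / 2 + (2 / p - 1 / 2) * v ^+ 2) * p = C * (2 - p / 2) * v ^+ 2 + C * (p / 2).
    by move=> p p0; field.
  by apply; rewrite gt_eqF.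
suff H : 0 <= 4 * A * (A * v ^+ 2 - s * v + B).
  by rewrite pmulr_rge0 in H; [lra | lra].
have -> : 4 * A * (A * v ^+ 2 - s * v + B) = (2 * A * v - s) ^+ 2 + (4 * A * B - s ^+ 2) by ring.
rewrite s2; apply: addr_ge0; first exact: sqr_ge0.
have -> : 4 * A * B - 2 * pi = pi * (C ^+ 2 * (4 - pi) - 2).
  by rewrite /A /B; move: (pi : R) => p; rewrite /C; field.
apply: mulr_ge0; first lra.
rewrite /C; lra.
Qed.
End Key.

Section Sub.
Variable R : realType.
Local Notation mu := (@lebesgue_measure R).

Lemma derive_lin (k m : R) : (fun x : R => x * k + m)^`()%classic = cst k.
Proof.
apply/funext => x; rewrite derive1E deriveD// deriveM// !derive_cst derive_id.
rewrite scaler0 add0r addr0; exact: mulr1.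
Qed.

Lemma sub_lin (k m a : R) (G : R -> R) : 0 < k -> continuous G ->
  (forall x, 0 <= G x) ->
  (\int[mu]_(x in `[(a * k + m)%R, +oo[) (G x)%:E =
   \int[mu]_(x in `[a%R, +oo[) (G (x * k + m)%R * k)%:E)%E.
Proof.
move=> k0 cG G0.
have := @increasing_ge0_integration_by_substitutiony R (fun x => x * k + m) G a.
rewrite derive_lin => ->.
- by apply: eq_integral => x _.
- by move=> x y _ _ xy; rewrite ltrD2r ltr_pM2r.
- by move=> x _; exact: cst_continuous.
- exact: is_cvg_cst.
- exact: is_cvg_cst.
- split.
  + by move=> x _; apply: derivableD => //; apply: derivableM.
  + apply: cvg_at_right_filter.
    apply: cvgD; last exact: cvg_cst.
    apply: cvgM; [exact: cvg_id|exact: cvg_cst].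
- apply: (cvg_comp (fun x => x * k) (fun r => r + m)); last exact: cvg_addrr.
  by apply: gt0_cvgMly => //; exact: cvg_id.
- by apply: continuous_subspaceT.
- by [].
Qed.
End Sub.

Section FTC.
Variable R : realType.
Local Notation mu := (@lebesgue_measure R).

Lemma derive_E (c v : R) :
  (fun v => expR (v ^+ 2 * c))^`()%classic v = expR (v ^+ 2 * c) * (2 * v * c).
Proof.
rewrite (_ : (fun v => expR (v ^+ 2 * c)) = expR \o (fun v => v ^+ 2 * c)) //.
rewrite derive1_comp //.
rewrite derive1Mr // exp_derive1 expr1.
by rewrite derive1E derive_val.
Qed.

Lemma derivable_E (c v : R) : derivable (fun w : R => expR (w ^+ 2 * c)) v 1.
Proof.
rewrite (_ : (fun w : R => expR (w ^+ 2 * c)) = expR \o (fun w : R => w ^+ 2 * c)) //.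
Qed.

Lemma derivable_kE (k c v : R) : derivable (fun w : R => k * expR (w ^+ 2 * c)) v 1.
Proof.
by apply: derivableM => //.
Qed.

Lemma continuous_E (c : R) : continuous (fun w : R => expR (w ^+ 2 * c)).
Proof.
move=> v; apply: differentiable_continuous; apply/derivable1_diffP.
exact: derivable_E.
Qed.

Lemma continuous_kE (k c : R) : continuous (fun w : R => k * expR (w ^+ 2 * c)).
Proof.
move=> v; apply: differentiable_continuous; apply/derivable1_diffP.
exact: derivable_kE.
Qed.

Lemma tail_h (x : R) : 0 <= x ->
 (\int[mu]_(v in `[x%R, +oo[) (v / pi * expR (v ^+ 2 * (- 2 / pi)))%:E =
   (4^-1 * expR (x ^+ 2 * (- 2 / pi)))%:E)%E.
Proof.
move=> x0.
have pi0 : 0 < pi :> R := pi_gt0 R.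
set c := - 2 / pi.
have := @ge0_continuous_FTC2y R (fun v => v / pi * expR (v ^+ 2 * c))
   (fun v => - 4^-1 * expR (v ^+ 2 * c)) x 0.
rewrite -EFinB sub0r => ->.
- by rewrite mulNr opprK.
- move=> v xv; apply: mulr_ge0; last exact: expR_ge0.
  by apply: divr_ge0; [exact: le_trans xv | exact: ltW].
- apply: continuous_subspaceT => v.
  apply: cvgM; last exact: continuous_E.
  by apply: cvgM; [exact: cvg_id | exact: cvg_cst].
- rewrite -(mulr0 (- 4^-1 : R)).
  apply: cvgM; first exact: cvg_cst.
  set q := Num.sqrt (2 / pi) : R.
  have q0 : 0 < q by rewrite sqrtr_gt0 divr_gt0.
  have -> : (fun v : R => expR (v ^+ 2 * c)) = gauss_fun \o (fun v => v * q).
    apply/funext => v; rewrite /gauss_fun /= exprMn sqr_sqrtr ?divr_ge0 ?ltW //.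
    by rewrite /c mulNr mulrN.
  apply: (cvg_comp (fun v => v * q) gauss_fun); last exact: cvg_gauss_fun.
  by apply: gt0_cvgMly => //; exact: cvg_id.
- move=> v _; exact: derivable_kE.
- apply: (@cvg_at_right_filter R R (fun v => - 4^-1 * expR (v ^+ 2 * c))).
  exact: continuous_kE.
- move=> v _; rewrite derive1Ml ?derivable_E // derive_E /c.
  have : forall p : R, p != 0 -> - 4^-1 * (expR (v ^+ 2 * (- 2 / p)) * (2 * v * (- 2 / p)))
     = v / p * expR (v ^+ 2 * (- 2 / p)).
    by move=> p p0; field.
  by apply; rewrite gt_eqF.
Qed.
End FTC.

Section Gauss.
Variable R : realType.
Local Notation mu := (@lebesgue_measure R).
Variables (sigma m : R).
Hypothesis s0 : 0 < sigma.

Lemma gauss_normal : gauss_pdf sigma m = normal_pdf m sigma.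
Proof.
apply/funext => x; rewrite /normal_pdf gt_eqF // /gauss_pdf /normal_peak /normal_fun.
congr (_^-1 * expR _).
  by congr Num.sqrt; rewrite -mulr_natr; ring.
by rewrite -mulr_natr; congr (_ / _); ring.
Qed.

Lemma gauss_ge0 x : 0 <= gauss_pdf sigma m x.
Proof. by rewrite /gauss_pdf mulr_ge0 ?invr_ge0 ?sqrtr_ge0 ?expR_ge0. Qed.

Lemma gauss_cont : continuous (gauss_pdf sigma m).
Proof. by rewrite gauss_normal; apply: continuous_normal_pdf; rewrite gt_eqF. Qed.

Lemma gauss_mfun (A : set R) : measurable_fun A (EFin \o gauss_pdf sigma m).
Proof.
apply/measurable_EFinP; apply: measurable_funTS.
exact: continuous_measurable_fun gauss_cont.
Qed.

Lemma gauss_total : (\int[mu]_x (gauss_pdf sigma m x)%:E = 1)%E.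
Proof. by rewrite gauss_normal integral_normal_pdf. Qed.

End Gauss.

Section Gauss2.
Variable R : realType.
Local Notation mu := (@lebesgue_measure R).
Variables (sigma : R).
Hypothesis s0 : 0 < sigma.

Lemma gauss_half (m : R) :
  (\int[mu]_(x in `[m, +oo[) (gauss_pdf sigma m x)%:E = (2^-1)%:E)%E.
Proof.
set k := Num.sqrt (2 * sigma ^+ 2).
have k0 : 0 < k by rewrite sqrtr_gt0 mulr_gt0 // exprn_gt0.
have k2 : k ^+ 2 = 2 * sigma ^+ 2 by rewrite sqr_sqrtr // ltW // mulr_gt0 // exprn_gt0.
have pi0 : 0 < pi :> R := pi_gt0 R.
have -> : m = 0 * k + m by rewrite mul0r add0r.
rewrite sub_lin //; last 2 first.
  exact: gauss_cont.
  exact: gauss_ge0.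
rewrite mul0r add0r.
transitivity (\int[mu]_(x in `[0%R, +oo[) ((Num.sqrt pi)^-1%:E * (gauss_fun x)%:E))%E.
  apply: eq_integral => v _; rewrite -EFinM; congr EFin.
  rewrite /gauss_pdf /gauss_fun addrK exprMn k2.
  have -> : 2 * pi * sigma ^+ 2 = pi * k ^+ 2 by rewrite k2; ring.
  rewrite sqrtrM ?ltW // sqrtr_sqr gtr0_norm // invfM -!mulrA; congr (_ * _).
  rewrite [k^-1 * _]mulrC -mulrA mulfV ?gt_eqF // mulr1; congr expR.
  by field; rewrite gt_eqF // exprn_gt0.
rewrite ge0_integralZl_EFin //; first last.
all: try (by move=> x _; rewrite lee_fin gauss_fun_ge0).
all: try (by apply/measurable_EFinP; apply: measurable_funTS; exact: measurable_gauss_fun).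
all: try (by rewrite invr_ge0 sqrtr_ge0).
rewrite integral0y_gauss -EFinM; congr EFin.
by rewrite mulrA mulVf ?mul1r // gt_eqF // sqrtr_gt0.
Qed.


Lemma gauss_meas (m : R) : measurable_fun setT (gauss_pdf sigma m).
Proof. apply: continuous_measurable_fun; exact: gauss_cont. Qed.

Lemma gauss_tail_ub (m x : R) : 0 <= x ->
  (\int[mu]_(s in `[(x * sigma + m)%R, +oo[) (gauss_pdf sigma m s)%:E
     <= (2^-1 * expR (- (x ^+ 2) / 2))%:E)%E.
Proof.
move=> x0.
set m' := x * sigma + m.
set c := expR (- (x ^+ 2) / 2).
have c0 : 0 <= c by exact: expR_ge0.
apply: (@le_trans _ _ (\int[mu]_(s in `[m', +oo[) (c * gauss_pdf sigma m' s)%:E)%E).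
  apply: ge0_le_integral => //.
  - by move=> s _; rewrite lee_fin; exact: gauss_ge0.
  - exact: gauss_mfun.
  - apply/measurable_EFinP; apply: measurable_funM => //.
    exact: measurable_funTS (gauss_meas m').
  - move=> s; rewrite /= in_itv /= andbT => hs; rewrite lee_fin.
    rewrite /gauss_pdf [c * _]mulrCA ler_pM2l; last first.
      by rewrite invr_gt0 sqrtr_gt0 mulr_gt0 ?exprn_gt0 // mulr_gt0 // pi_gt0.
    rewrite /c -expRD ler_expR.
    set u := s - m.
    have -> : s - m' = u - x * sigma by rewrite /u /m'; ring.
    have hu : x * sigma <= u by rewrite /u lerBrDr.
    rewrite -subr_ge0.
    have -> : - (x ^+ 2) / 2 + - ((u - x * sigma) ^+ 2) / (2 * sigma ^+ 2) -
       - (u ^+ 2) / (2 * sigma ^+ 2) = x * (u - x * sigma) / sigma.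
      by field; rewrite gt_eqF.
    by apply: divr_ge0; [apply: mulr_ge0 => //; rewrite subr_ge0 | exact: ltW].
under eq_integral do rewrite EFinM.
rewrite ge0_integralZl_EFin //; first last.
all: try (by move=> s _; rewrite lee_fin gauss_ge0).
all: try (by apply: gauss_mfun).
by rewrite gauss_half -EFinM mulrC.
Qed.


Lemma continuous_h : continuous (fun v : R => v / pi * expR (v ^+ 2 * (- 2 / pi))).
Proof.
move=> v; apply: cvgM; last exact: continuous_E.
by apply: cvgM; [exact: cvg_id | exact: cvg_cst].
Qed.

Lemma gauss_std (m v : R) :
  gauss_pdf sigma m (v * sigma + m) * sigma =
  (Num.sqrt (2 * pi))^-1 * expR (- (v ^+ 2) / 2).
Proof.
have pi0 : 0 < pi :> R := pi_gt0 R.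
rewrite /gauss_pdf addrK.
rewrite sqrtrM ?mulr_ge0 ?ltW // sqrtr_sqr gtr0_norm // invfM.
rewrite -!mulrA; congr (_ * _).
rewrite [sigma^-1 * _]mulrC -mulrA mulfV ?gt_eqF // mulr1; congr expR.
by rewrite exprMn; field; rewrite gt_eqF // exprn_gt0.
Qed.

Lemma gauss_tail_lb (m x : R) : 0 <= x ->
  ((4^-1 * expR (x ^+ 2 * (- 2 / pi)))%:E <=
   \int[mu]_(s in `[(x * sigma + m)%R, +oo[) (gauss_pdf sigma m s)%:E)%E.
Proof.
move=> x0.
have pi0 : 0 < pi :> R := pi_gt0 R.
rewrite sub_lin //; last 2 first.
  exact: gauss_cont.
  exact: gauss_ge0.
rewrite -tail_h //.
apply: ge0_le_integral => //.
- move=> v; rewrite /= in_itv /= andbT => xv; rewrite lee_fin.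
  apply: mulr_ge0; last exact: expR_ge0.
  by apply: divr_ge0; [exact: le_trans xv | exact: ltW].
- apply/measurable_EFinP; apply: measurable_funTS.
  apply: continuous_measurable_fun; exact: continuous_h.
- apply/measurable_EFinP; apply: measurable_funM => //.
  apply: measurableT_comp; first exact: gauss_meas.
  by apply: measurable_funD => //; apply: measurable_funM.
- move=> v; rewrite /= in_itv /= andbT => xv; rewrite lee_fin.
  rewrite gauss_std.
  have -> : expR (v ^+ 2 * (- 2 / pi)) = expR (- (2 * v ^+ 2) / pi).
    by congr expR; rewrite mulNr mulrN mulNr mulrA [v ^+ 2 * 2]mulrC.
  exact: key_ineq (le_trans x0 xv).
Qed.


Lemma gauss_sym (m x : R) :
  (\int[mu]_(s in `]-oo, (m - x * sigma)%R]) (gauss_pdf sigma m s)%:E =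
   \int[mu]_(s in `[(x * sigma + m)%R, +oo[) (gauss_pdf sigma m s)%:E)%E.
Proof.
have -> : m - x * sigma = - (x * sigma - m) by rewrite opprB.
rewrite ge0_integration_by_substitutionNy; last 2 first.
  apply: continuous_subspaceT; exact: gauss_cont.
  by move=> y _; exact: gauss_ge0.
have -> : x * sigma + m = (x * sigma - m) * 1 + m *+ 2 by rewrite mulr1 mulr2n; ring.
rewrite sub_lin //; last 2 first.
  exact: gauss_cont.
  exact: gauss_ge0.
apply: eq_integral => y _; congr EFin.
rewrite /= !mulr1 /gauss_pdf.
have -> : y + m *+ 2 - m = - (- y - m) by rewrite mulr2n; ring.
by rewrite sqrrN.
Qed.


Lemma gauss_split (m c : R) :
  (\int[mu]_(s in `[c, +oo[) (gauss_pdf sigma m s)%:E +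
   \int[mu]_(s in `]-oo, c]) (gauss_pdf sigma m s)%:E = 1)%E.
Proof.
rewrite -integral_itv_bndo_bndc; last exact: gauss_mfun.
rewrite -ge0_integral_setU //; last 3 first.
- exact: gauss_mfun.
- by move=> s _; rewrite lee_fin gauss_ge0.
- apply/disj_setPS => s [] /=; rewrite !in_itv /= andbT => h1 h2.
  by move: (le_lt_trans h1 h2); rewrite ltxx.
have -> : `[c, +oo[ `|` `]-oo, c[ = [set: R].
  apply/seteqP; split => s //= _.
  rewrite !in_itv /= andbT.
  by case: (leP c s) => h; [left|right].
exact: gauss_total.
Qed.

End Gauss2.

Lemma ebound (R : realType) (a b : \bar R) (r : R) : (0 <= a)%E -> (0 <= b)%E ->
  (a + b = 1)%E -> (r%:E <= b)%E -> (a <= (1 - r)%:E)%E.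
Proof.
case: a => [a| |] //; case: b => [b| |] //= a0 b0.
rewrite !lee_fin in a0 b0 * => -[ab] rb; lra.
Qed.

Lemma region_meas (R : realType) (N : nat) (sigma : R) (mu p : 'I_N -> R) (n' : 'I_N) :
  measurable (decision_region sigma mu p n').
Proof.
apply: closed_measurable.
have -> : decision_region sigma mu p n' = \bigcap_(k in [set k | k != n'])
   [set s | (s - mu n') ^+ 2 - (s - mu k) ^+ 2 <= 2 * sigma ^+ 2 * ln (p n' / p k)].
  by [].
apply: closed_bigI => k _.
set g := fun s : R => (s - mu n') ^+ 2 - (s - mu k) ^+ 2.
have cg : continuous g.
  move=> s; apply: differentiable_continuous; apply/derivable1_diffP.
  by rewrite /g.
have := (proj1 (continuous_closedP g) cg _ (@closed_le R (2 * sigma ^+ 2 * ln (p n' / p k)))).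
by [].
Qed.

Theorem proposition1 (R : realType) (N : nat) (sigma : R) (mu p : 'I_N -> R)
    (n n' : 'I_N) :
  0 < sigma ->
  (forall k, 0 < p k) ->
  \sum_(k < N) p k = 1 ->
  n != n' ->
  mu n != mu n' ->
  (\int[@lebesgue_measure R]_(s in decision_region sigma mu p n')
      (gauss_pdf sigma (mu n) s)%:E
   <= (error_bound (dist_d sigma mu p n n'))%:E)%E.
Proof.
move=> s0 p0 _ nn' mnn'.
set m := mu n.
set D := mu n' - m.
set c := 2 * sigma ^+ 2 * ln (p n' / p n).
set d := dist_d sigma mu p n n'.
set f := gauss_pdf sigma m.
have D0 : D != 0 by rewrite /D subr_eq0 eq_sym.
have aD0 : 0 < `|D| by rewrite normr_gt0.
have dE : d * (2 * sigma * `|D|) = D ^+ 2 - c.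
  by rewrite /d /dist_d divfK // mulf_neq0 ?gt_eqF // mulr_gt0.
have reg s : decision_region sigma mu p n' s -> D ^+ 2 - 2 * D * (s - m) <= c.
  move=> /(_ n nn'); rewrite -/m -/c.
  have -> : (s - mu n') ^+ 2 - (s - m) ^+ 2 = D ^+ 2 - 2 * D * (s - m) by rewrite /D; ring.
  by [].
have mreg := @region_meas R N sigma mu p n'.
have f0 s : 0 <= f s by exact: gauss_ge0.
have fmeas (A : set R) : measurable_fun A (EFin \o f) by exact: gauss_mfun.
have ige0 (A : set R) : (0 <= \int[lebesgue_measure]_(s in A) (f s)%:E)%E.
  by apply: integral_ge0 => s _; rewrite lee_fin.
have eE : expR ((- d) ^+ 2 * (- 2 / pi)) = expR (- (2 * d ^+ 2) / pi).
  by congr expR; rewrite sqrrN mulNr mulrN mulNr mulrA [d ^+ 2 * 2]mulrC.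
have [Dpos|Dneg] := ltP 0 D.
- have aDE : `|D| = D by rewrite gtr0_norm.
  have incl : decision_region sigma mu p n' `<=` `[(d * sigma + m)%R, +oo[.
    move=> s /reg hs; rewrite /= in_itv /= andbT -lerBrDr.
    rewrite aDE in dE.
    have : 0 <= 2 * D * ((s - m) - d * sigma) by nra.
    by rewrite pmulr_rge0 ?subr_ge0 // mulr_gt0.
  apply: (@le_trans _ _ (\int[lebesgue_measure]_(s in `[(d * sigma + m)%R, +oo[) (f s)%:E)%E).
    apply: ge0_subset_integral => //; first exact: fmeas.
    by move=> s _; rewrite lee_fin.
  rewrite /error_bound; case: ifPn => d0.
  + exact: gauss_tail_ub.
  + have d0' : 0 <= - d by rewrite oppr_ge0 ltW // ltNge.
    apply: (@ebound R _ _ _ (ige0 _) (ige0 _) (@gauss_split R sigma s0 m (d * sigma + m))).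
    have -> : d * sigma + m = m - (- d) * sigma by rewrite mulNr opprK addrC.
    rewrite gauss_sym // -eE.
    exact: gauss_tail_lb.
- have Dlt : D < 0 by rewrite lt_neqAle D0.
  have aDE : `|D| = - D by rewrite ltr0_norm.
  have incl : decision_region sigma mu p n' `<=` `]-oo, (m - d * sigma)%R].
    move=> s /reg hs; rewrite /= in_itv /=.
    rewrite aDE in dE.
    have : 0 <= (- 2 * D) * ((m - d * sigma) - s) by nra.
    rewrite pmulr_rge0 ?subr_ge0 //; nra.
  apply: (@le_trans _ _ (\int[lebesgue_measure]_(s in `]-oo, (m - d * sigma)%R]) (f s)%:E)%E).
    apply: ge0_subset_integral => //; first exact: fmeas.
    by move=> s _; rewrite lee_fin.
  rewrite /error_bound; case: ifPn => d0.
  + rewrite gauss_sym //; exact: gauss_tail_ub.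
  + have d0' : 0 <= - d by rewrite oppr_ge0 ltW // ltNge.
    have := @gauss_split R sigma s0 m (m - d * sigma).
    rewrite addeC => hsplit.
    apply: (@ebound R _ _ _ (ige0 _) (ige0 _) hsplit).
    have -> : m - d * sigma = (- d) * sigma + m by rewrite mulNr addrC.
    rewrite -eE; exact: gauss_tail_lb.
Qed.
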